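(* Let $\mathcal{X}$ be a set and let $k:\mathcal{X}\times\mathcal{X}\to\mathbb{R}_{\ge 0}$ be a symmetric positive semidefinite function (i.e. for every finite subset $\{x_1,\dots,x_m\}\subseteq\mathcal{X}$ the matrix $(k(x_i,x_j))_{i,j}$ is positive semidefinite) whose image $\{k(x,y):x,y\in\mathcal{X}\}$ has exactly two elements. Then $k$ is a strong kernel.
   Context: A strong kernel on a set $\mathcal{X}$ is a symmetric function $k:\mathcal{X}\times\mathcal{X}\to\mathbb{R}_{\ge 0}$ such that $k(x,y)\ge\min\{k(x,z),k(z,y)\}$ for all $x,y,z\in\mathcal{X}$. *)

(* Defs.v *)
From Stdlib Require Import Reals.
Open Scope R_scope.

Fixpoint rsum (n : nat) (f : nat -> R) : R :=
  match n with
  | O => 0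
  | S n' => rsum n' f + f n'
  end.

Definition symmetric_kernel {X : Type} (k : X -> X -> R) : Prop :=
  forall x y, k x y = k y x.

Definition nonneg_kernel {X : Type} (k : X -> X -> R) : Prop :=
  forall x y, 0 <= k x y.

(* For every finite subset {x_0,...,x_{m-1}} (distinct points) of X, the Gram
   matrix (k(x_i,x_j))_{i,j} is positive semidefinite, i.e. c^T K c >= 0
   for every real vector c. *)
Definition psd_kernel {X : Type} (k : X -> X -> R) : Prop :=
  forall (m : nat) (x : nat -> X),
    (forall i j, (i < m)%nat -> (j < m)%nat -> x i = x j -> i = j) ->
    forall c : nat -> R,
      0 <= rsum m (fun i => rsum m (fun j => c i * c j * k (x i) (x j))).

Definition image_has_two_elements {X : Type} (k : X -> X -> R) : Prop :=
  exists a b : R, a <> b /\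
    (forall x y, k x y = a \/ k x y = b) /\
    (exists x y, k x y = a) /\ (exists x y, k x y = b).

Definition strong_kernel {X : Type} (k : X -> X -> R) : Prop :=
  symmetric_kernel k /\ nonneg_kernel k /\
  forall x y z, Rmin (k x z) (k z y) <= k x y.

(* Main.v *)
Require Import Defs.
From Stdlib Require Import Reals.
From Stdlib Require Import Lra Lia Classical.
Open Scope R_scope.

Theorem mainTheorem5 (X : Type) (k : X -> X -> R) :
  symmetric_kernel k -> nonneg_kernel k -> psd_kernel k ->
  image_has_two_elements k -> strong_kernel k.
Proof.
  intros Hs Hn Hp [a [b [Hab [Hv _]]]].
  split; [exact Hs|]. split; [exact Hn|].
  intros x y z.
  destruct (Rle_dec (Rmin (k x z) (k z y)) (k x y)) as [H|H]; [exact H|].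
  exfalso. apply Rnot_le_lt in H.
  assert (H1 : k x y < k x z) by (eapply Rlt_le_trans; [exact H| apply Rmin_l]).
  assert (H2 : k x y < k z y) by (eapply Rlt_le_trans; [exact H| apply Rmin_r]).
  assert (Heq : k z y = k x z)
    by (destruct (Hv x y) as [E1|E1]; destruct (Hv x z) as [E2|E2];
        destruct (Hv z y) as [E3|E3]; lra).
  assert (Hmax : forall u v, k u v <= k x z)
    by (intros u v; destruct (Hv x y) as [E1|E1]; destruct (Hv x z) as [E2|E2];
        destruct (Hv u v) as [E3|E3]; lra).
  pose proof (Hn x y) as Hnn.
  destruct (classic (x = y)) as [Exy|Exy].
  - subst y.
    assert (Ezx : z <> x) by (intro E; subst z; lra).
    pose (f := fun i : nat => match i with 0%nat => x | _ => z end).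
    pose (c := fun i : nat => match i with 0%nat => 1 | _ => -1 end).
    assert (Hi : forall i j, (i < 2)%nat -> (j < 2)%nat -> f i = f j -> i = j).
    { intros i j Hi Hj E. destruct i as [|[|i]]; destruct j as [|[|j]];
        simpl in E; try lia; congruence. }
    pose proof (Hp 2%nat f Hi c) as P. simpl in P.
    rewrite (Hs z x) in P. pose proof (Hmax z z). lra.
  - assert (Ezx : z <> x) by (intro E; subst z; lra).
    assert (Ezy : z <> y) by (intro E; subst z; lra).
    pose (f := fun i : nat => match i with 0%nat => x | 1%nat => y | _ => z end).
    pose (c := fun i : nat => match i with 0%nat => 1 | 1%nat => 1 | _ => -2 end).
    assert (Hi : forall i j, (i < 3)%nat -> (j < 3)%nat -> f i = f j -> i = j).
    { intros i j Hi Hj E. destruct i as [|[|[|i]]]; destruct j as [|[|[|j]]];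
        simpl in E; try lia; congruence. }
    pose proof (Hp 3%nat f Hi c) as P. simpl in P.
    rewrite (Hs z x), (Hs y z), (Hs y x) in P.
    pose proof (Hmax x x). pose proof (Hmax y y). pose proof (Hmax z z). lra.
Qed.
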